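(* Let $D=(E,\mathcal{F})$ be a binary delta-matroid. If every element of $E$ has primal type $u$ in $D$, then $D$ is even, i.e. $|X\Delta Y|$ is even for all $X,Y\in\mathcal{F}$.
   Context: A delta-matroid is a pair $D=(E,\mathcal{F})$ with $E$ finite, $\mathcal{F}$ a nonempty collection of subsets of $E$, such that for all $X,Y\in\mathcal{F}$ and $u\in X\Delta Y$ there is $v\in X\Delta Y$ (possibly $v=u$) with $X\Delta\{u,v\}\in\mathcal{F}$. The twist by $A\subseteq E$ is $D*A=(E,\{A\Delta X:X\in\mathcal{F}\})$. For a symmetric matrix $C$ over $\mathrm{GF}(2)$ indexed by $E$, $D(C)=(E,\{A\subseteq E: C[A]\text{ non-singular}\})$, with $C[A]$ the principal submatrix on $A$ and $C[\emptyset]$ non-singular by convention; a delta-matroid is binary if some twist of it is isomorphic to some $D(C)$. Let $\mathcal{F}_{\min}(D)$ be the set of minimum-cardinality feasible sets. An element $e$ is a ribbon loop if it lies in no member of $\mathcal{F}_{\min}(D)$; a ribbon loop $e$ is orientable if it is not a ribbon loop in $D*e$. An element has primal type $u$ if it is an orientable ribbon loop. *)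

(* Defs.v *)
From mathcomp Require Import all_boot all_algebra.
Set Implicit Arguments. Unset Strict Implicit. Unset Printing Implicit Defensive.
Import GRing.Theory.
Local Open Scope ring_scope.

Section DeltaMatroid.
Variable E : finType.

Definition symd (X Y : {set E}) : {set E} := (X :\: Y) :|: (Y :\: X).

Definition is_delta_matroid (F : {set {set E}}) : Prop :=
  F != set0 /\
  forall X Y, X \in F -> Y \in F -> forall u, u \in symd X Y ->
    exists v, v \in symd X Y /\ symd X [set u; v] \in F.

Definition twist (F : {set {set E}}) (A : {set E}) : {set {set E}} :=
  [set symd A X | X in F].

Definition Fmin (F : {set {set E}}) : {set {set E}} :=
  [set X in F | [forall Y in F, #|X| <= #|Y|]%N].

Definition ribbon_loop (F : {set {set E}}) (e : E) : Prop :=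
  forall X, X \in Fmin F -> e \notin X.

Definition orientable_ribbon_loop (F : {set {set E}}) (e : E) : Prop :=
  ribbon_loop F e /\ ~ ribbon_loop (twist F [set e]) e.

Definition primal_type_u (F : {set {set E}}) (e : E) : Prop :=
  orientable_ribbon_loop F e.

Definition even_dm (F : {set {set E}}) : Prop :=
  forall X Y, X \in F -> Y \in F -> ~~ odd #|symd X Y|.
End DeltaMatroid.

(* principal submatrix C[A], rows/columns of A in increasing order *)
Definition principal_submx n (C : 'M['F_2]_n) (A : {set 'I_n}) : 'M['F_2]_#|A| :=
  \matrix_(i < #|A|, j < #|A|) C (enum_val i) (enum_val j).

(* D(C): sets A with C[A] non-singular (C[emptyset] has det 1) *)
Definition DC n (C : 'M['F_2]_n) : {set {set 'I_n}} :=
  [set A : {set 'I_n} | \det (principal_submx C A) != 0].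

Definition binary_dm (E : finType) (F : {set {set E}}) : Prop :=
  exists (A : {set E}) (n : nat) (C : 'M['F_2]_n) (f : E -> 'I_n),
    C^T = C /\ bijective f /\
    [set [set f x | x in X] | X : {set E} in twist F A] = DC C.

(* Main.v *)
Require Import Defs.
From mathcomp Require Import all_boot all_algebra.
From mathcomp Require Import fingroup perm.
Set Implicit Arguments. Unset Strict Implicit. Unset Printing Implicit Defensive.
Import GRing.Theory.
Local Open Scope ring_scope.
Lemma F2_cases (x : 'F_2) : x = 0 \/ x = 1.
Proof. case: x => [[|[|k]] Hk]; [left|right|by []]; exact: val_inj. Qed.
Lemma F2_addxx (x : 'F_2) : x + x = 0.
Proof. case: (F2_cases x) => ->; [by rewrite addr0| by apply/eqP]. Qed.

Lemma invol_sum (T : finType) (g : T -> T) (t : T -> 'F_2) :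
  involutive g -> (forall x, t (g x) = t x) ->
  \sum_x t x = \sum_(x | g x == x) t x.
Proof.
move=> gK tg.
rewrite (bigID (fun x => g x == x)) /=.
suff -> : \sum_(x | g x != x) t x = 0 by rewrite addr0.
rewrite (bigID (fun x => (enum_rank x < enum_rank (g x))%N)) /=.
rewrite [in X in _ + X](reindex_inj (can_inj gK)) /=.
rewrite -[RHS](F2_addxx (\sum_(i | (g i != i) && (enum_rank i < enum_rank (g i))%N) t i)).
congr (_ + _).
apply: eq_big => x; last by rewrite tg.
rewrite gK eq_sym ltnNge negbK.
case: eqP => //= hx; rewrite ltn_neqAle. have -> // : (enum_rank x != enum_rank (g x)) by apply/eqP => /enum_rank_inj e; apply: hx; rewrite -e.
Qed.

Lemma det_alt_odd m (P : 'M['F_2]_m) :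
  P^T = P -> (forall i, P i i = 0) -> odd m -> \det P = 0.
Proof.
move=> Ps Pd om.
have Pe i j : P i j = P j i by rewrite -{1}Ps mxE.
rewrite /determinant (@invol_sum _ (fun s : {perm 'I_m} => s^-1)%g); last 2 first.
- exact: invgK.
- move=> s; rewrite odd_permV; congr (_ * _).
  rewrite (reindex_inj (@perm_inj _ s)) /=.
  by apply: eq_bigr => i _; rewrite permK Pe.
apply: big1 => s /eqP ss.
have [i si] : exists i, s i = i.
  case: (pickP (fun i => s i == i)) => [i /eqP|none]; first by exists i.
  have sK : involutive s by move=> i; rewrite -{1}ss permK.
  have := @invol_sum _ s (fun _ => 1) sK (fun _ => erefl).
  rewrite [X in _ = X]big_pred0 // sumr_const card_ord -(Fp_nat_mod (isT : prime 2)) modn2 om.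
  by move/eqP; rewrite oner_eq0.
by rewrite (bigD1 i) //= si Pd mul0r mulr0.
Qed.

Lemma sum_delta {T : finType} (a : T) (f : T -> 'F_2) :
  \sum_i f i * (a == i)%:R = f a.
Proof.
rewrite (bigD1 a) //= eqxx mulr1 big1 ?addr0 // => i /negbTE.
by rewrite eq_sym => ->; rewrite mulr0.
Qed.

Definition Kset n (C : 'M['F_2]_n) (A : {set 'I_n}) : Prop :=
  exists v : 'rV['F_2]_n, v != 0 /\ (forall i, i \notin A -> v 0 i = 0) /\
    (forall i, i \in A -> (v *m C) 0 i = 0).

Section Kchar.
Variables (n : nat) (C : 'M['F_2]_n) (A : {set 'I_n}).
Let R : 'M['F_2]_(#|A|, n) := \matrix_(k, i) ((enum_val k == i)%:R).

Let RE k i : R k i = (enum_val k == i)%:R.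
Proof. by rewrite mxE. Qed.

Let RT_E (x : 'rV['F_2]_n) k : (x *m R^T) 0 k = x 0 (enum_val k).
Proof.
rewrite mxE -[RHS](sum_delta (enum_val k) (fun i => x 0 i)).
by apply: eq_bigr => i _; rewrite !mxE.
Qed.

Let RRT : R *m R^T = 1%:M.
Proof.
apply/matrixP => k k'; rewrite !mxE.
rewrite (eq_bigr (fun i => (enum_val k' == i)%:R * (enum_val k == i)%:R)).
  by rewrite sum_delta (inj_eq enum_val_inj) eq_sym.
by move=> i _; rewrite !mxE mulrC.
Qed.

Let suppK (v : 'rV['F_2]_n) : (forall i, i \notin A -> v 0 i = 0) ->
  v *m R^T *m R = v.
Proof.
move=> hv; apply/matrixP => z i; rewrite (ord1 z) mxE.
case: (boolP (i \in A)) => hi.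
  rewrite (eq_bigr (fun k => v 0 (enum_val k) * (enum_rank_in hi i == k)%:R)).
    by rewrite sum_delta enum_rankK_in.
  move=> k _; rewrite RT_E mxE; congr (_ * _); congr (_%:R).
  congr nat_of_bool; by rewrite -[X in _ = X](inj_eq enum_val_inj) (enum_rankK_in hi hi) eq_sym.
rewrite hv // big1 // => k _; rewrite RT_E RE.
have : enum_val k != i by apply: contraNneq hi => <-; exact: enum_valP.
by move/negbTE => ->; rewrite mulr0.
Qed.

Let PE : principal_submx C A = R *m C *m R^T.
Proof.
apply/matrixP => k k'; rewrite !mxE.
rewrite (eq_bigr (fun j => (R *m C) k j * (enum_val k' == j)%:R)).
  rewrite sum_delta mxE (eq_bigr (fun i => C i (enum_val k') * (enum_val k == i)%:R)).
    by rewrite sum_delta.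
  by move=> i _; rewrite mxE mulrC.
by move=> j _; rewrite !mxE.
Qed.

Lemma det_Kset : \det (principal_submx C A) == 0 <-> Kset C A.
Proof.
split.
  move/det0P => [w wn0 wP].
  exists (w *m R); split; [|split].
  - apply: contraNneq wn0 => v0.
    by rewrite -[w]mulmx1 -RRT mulmxA v0 mul0mx.
  - move=> i hi; rewrite mxE big1 // => k _; rewrite mxE.
    have : enum_val k != i by apply: contraNneq hi => <-; exact: enum_valP.
    by move/negbTE => ->; rewrite mulr0.
  - move=> i hi; rewrite -(enum_rankK_in hi hi) -RT_E.
    by rewrite -!mulmxA (mulmxA R) -PE wP mxE.
move=> [v [vn0 [vs vC]]].
apply/det0P; exists (v *m R^T).
  by apply: contraNneq vn0 => w0; rewrite -(suppK vs) w0 mul0mx.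
rewrite PE !mulmxA (suppK vs).
apply/matrixP => z k; rewrite (ord1 z) RT_E vC ?mxE //; exact: enum_valP.
Qed.
End Kchar.


Lemma in_symd (T : finType) (X Y : {set T}) i :
  (i \in symd X Y) = (i \in X) (+) (i \in Y).
Proof. by rewrite /symd !inE; case: (i \in X); case: (i \in Y). Qed.

Lemma F2_sq (x : 'F_2) : x * x = x.
Proof. by case: (F2_cases x) => ->; rewrite ?mulr0 ?mulr1. Qed.

Lemma quad_lin n (C : 'M['F_2]_n) (x : 'rV['F_2]_n) : C^T = C ->
  \sum_k x 0 k * C k k = \sum_k x 0 k * (x *m C) 0 k.
Proof.
move=> Cs; have Ce i j : C i j = C j i by rewrite -{1}Cs mxE.
rewrite [RHS](eq_bigr (fun k => \sum_l x 0 k * x 0 l * C l k)); last first.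
  by move=> k _; rewrite mxE mulr_sumr; apply: eq_bigr => l _; rewrite mulrA.
rewrite pair_big /=.
rewrite (@invol_sum _ (fun p => (p.2, p.1)) (fun p => x 0 p.1 * x 0 p.2 * C p.2 p.1)); last 2 first.
- by case.
- by case=> a b /=; rewrite Ce [x 0 b * _]mulrC.
rewrite (eq_bigl (fun p => predT p.1 && (p.2 == p.1))); last first.
  by case=> a b /=; rewrite xpair_eqE [a == b]eq_sym andbb.
rewrite -(pair_big_dep predT (fun a b => b == a) (fun a b => x 0 a * x 0 b * C b a)) /=.
by apply: eq_bigr => k _; rewrite big_pred1_eq F2_sq.
Qed.

Lemma diag0 n (C : 'M['F_2]_n) (S : {set 'I_n}) : C^T = C -> ~ Kset C S ->
  (forall j, Kset C (symd S [set j])) -> forall j, C j j = 0.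
Proof.
move=> Cs nK KS.
pose ell (x : 'rV['F_2]_n) := \sum_k x 0 k * C k k.
have ellD x y : ell (x + y) = ell x + ell y.
  by rewrite /ell -big_split; apply: eq_bigr => k _; rewrite mxE mulrDl.
have ell0 : ell 0 = 0 by rewrite /ell big1 // => k _; rewrite mxE mul0r.
have ellZ a x : ell (a *: x) = a * ell x.
  by rewrite /ell mulr_sumr; apply: eq_bigr => k _; rewrite mxE mulrA.
have ellq x : ell x = \sum_k x 0 k * (x *m C) 0 k := quad_lin x Cs.
have ell_delta j : ell (delta_mx 0 j) = C j j.
  rewrite /ell (eq_bigr (fun k => C k k * (j == k)%:R)) ?sum_delta // => k _.
  by rewrite mxE eqxx /= mulrC eq_sym.
have hz j : exists z : 'rV['F_2]_n, j \in S -> [/\ z 0 j = 0,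
    (forall i, i \notin S -> z 0 i = 0) &
    (forall i, i \in S -> (z *m C) 0 i = (i == j)%:R)].
  case: (boolP (j \in S)) => hj; last by exists 0.
  have [v [vn0 [vs vC]]] := KS j.
  exists v => _.
  have vj : v 0 j = 0 by apply: vs; rewrite in_symd hj in_set1 eqxx.
  have vsS : forall i, i \notin S -> v 0 i = 0.
    move=> i hi; apply: vs; rewrite in_symd (negbTE hi) in_set1 /=.
    by apply: contraNneq hi => ->.
  split => // i hi.
  case: (eqVneq i j) => [->|nij].
    case: (F2_cases ((v *m C) 0 j)) => [h0|->]; last by [].
    exfalso; apply: nK; exists v; split => //; split => // i' hi'.
    case: (eqVneq i' j) => [->//|ne]; apply: vC.
    by rewrite in_symd hi' in_set1 (negbTE ne).
  by rewrite vC // in_symd hi in_set1 (negbTE nij).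
have [Z hZ] := fin_all_exists hz.
have hZ1 j : j \in S -> Z j 0 j = 0 by move=> /hZ [].
have hZ2 j : j \in S -> forall i, i \notin S -> Z j 0 i = 0 by move=> /hZ [].
have hZ3 j : j \in S -> forall i, i \in S -> (Z j *m C) 0 i = (i == j)%:R by move=> /hZ [].
have ellS0 (x : 'rV['F_2]_n) : (forall i, i \notin S -> x 0 i = 0) -> ell x = 0.
  move=> xs.
  pose w := \sum_(j in S) (x *m C) 0 j *: Z j.
  have wx : w = x.
    apply/eqP; rewrite -subr_eq0; apply/eqP.
    case: (eqVneq (w - x) 0) => // hne; exfalso; apply: nK; exists (w - x).
    split => //; split.
    - move=> i hi; rewrite /w !mxE summxE big1 ?xs ?subr0 // => j hj.
      by rewrite mxE hZ2 ?mulr0.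
    - move=> i hi; rewrite mulmxBl /w mulmx_suml mxE summxE.
      rewrite (eq_bigr (fun j => (x *m C) 0 j * (i == j)%:R)); last first.
        by move=> j hj; rewrite -scalemxAl mxE hZ3.
      rewrite (bigD1 i) //= eqxx mulr1 big1 ?addr0; last first.
        by move=> j /andP [_ nj]; rewrite eq_sym (negbTE nj) mulr0.
      by rewrite [X in _ + X]mxE subrr.
  rewrite -wx /w (big_morph ell ellD ell0) big1 // => j hj.
  rewrite ellZ ellq (eq_bigr (fun k => Z j 0 k * (j == k)%:R)) ?sum_delta.
    by rewrite hZ1 ?mulr0.
  move=> k _; case: (boolP (k \in S)) => hk.
    by rewrite hZ3 // eq_sym.
  by rewrite hZ2 ?mul0r.
move=> j; case: (boolP (j \in S)) => hj.
  rewrite -ell_delta ellS0 // => i hi; rewrite mxE eqxx /=.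
  have : i != j by apply: contraNneq hi => ->.
  by move/negbTE => ->.
have [v [vn0 [vs vC]]] := KS j.
have vj : v 0 j = 1.
  case: (F2_cases (v 0 j)) => // h0; exfalso; apply: nK; exists v; split => //; split.
  - move=> i hi; case: (eqVneq i j) => [->//|ne]; apply: vs.
    by rewrite in_symd (negbTE hi) in_set1 /=.
  - move=> i hi; apply: vC; rewrite in_symd hi in_set1 /=.
    by apply: contraNneq hj => <-.
have ev0 : ell v = 0.
  rewrite ellq big1 // => k _.
  case: (boolP (k \in symd S [set j])) => hk; first by rewrite vC ?mulr0.
  by rewrite vs ?mul0r.
have : ell v = ell (v - delta_mx 0 j) + ell (delta_mx 0 j) by rewrite -ellD subrK.
rewrite ev0 ell_delta ellS0 ?add0r; first by move=> <-.
move=> i hi; rewrite !mxE eqxx /=.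
case: (eqVneq i j) => [->|ne]; first by rewrite vj subrr.
rewrite vs ?subr0 //; by rewrite in_symd (negbTE hi) in_set1 /=.
Qed.

Section SymdFacts.
Variable T : finType.
Implicit Types X Y A : {set T}.

Lemma symd0 A : symd A set0 = A.
Proof. by apply/setP => i; rewrite in_symd in_set0 addbF. Qed.

Lemma symdxx A : symd A A = set0.
Proof. by apply/setP => i; rewrite in_symd in_set0 addbb. Qed.

Lemma symdK A X : symd A (symd A X) = X.
Proof. by apply/setP => i; rewrite !in_symd addbA addbb. Qed.

Lemma symd_symd A X Y : symd (symd A X) (symd A Y) = symd X Y.
Proof.
apply/setP => i; rewrite !in_symd.
by case: (i \in A); case: (i \in X); case: (i \in Y).
Qed.

Lemma odd_symd X Y : odd #|symd X Y| = odd #|X| (+) odd #|Y|.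
Proof.
have h1 : #|symd X Y| = #|X :\: Y| + #|Y :\: X|.
  rewrite /symd cardsU.
  have -> : (X :\: Y) :&: (Y :\: X) = set0.
    by apply/setP => i; rewrite !inE; case: (i \in X); case: (i \in Y).
  by rewrite cards0 subn0.
have h2 := cardsID Y X; have h3 := cardsID X Y.
rewrite setIC in h3.
rewrite h1 -h2 -h3 !oddD.
by case: (odd #|X :\: Y|); case: (odd #|Y :\: X|); case: (odd #|X :&: Y|).
Qed.
End SymdFacts.

Lemma imset_symd (T U : finType) (f : T -> U) (X Y : {set T}) :
  bijective f -> f @: symd X Y = symd (f @: X) (f @: Y).
Proof.
move=> fb; have finj := bij_inj fb; case: fb => g fK gK.
apply/setP => y; rewrite -(gK y) in_symd !mem_imset //.
by rewrite in_symd.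
Qed.

Theorem lemma4 (E : finType) (F : {set {set E}}) :
  is_delta_matroid F -> binary_dm F ->
  (forall e : E, primal_type_u F e) ->
  even_dm F.
Proof.
move=> [Fn0 _] [A [n [C [f [Cs [fb H]]]]]] hu.
have rl e : ribbon_loop F e := (hu e).1.
have nrl e : ~ ribbon_loop (twist F [set e]) e := (hu e).2.
have F0 : set0 \in F.
  have [X0 X0F] := set0Pn _ Fn0.
  case: (arg_minnP (fun X : {set E} => #|X|) X0F) => X XF Xmin.
  have XFm : X \in Fmin F by rewrite /Fmin inE; apply/andP; split => //; apply/forall_inP.
  suff <- : X = set0 by [].
  by apply/setP => e; rewrite in_set0; apply/negbTE/rl.
have nsing e : [set e] \notin F.
  apply/negP => he; apply: (nrl e) => X.
  rewrite /Fmin inE => /andP [XT /forall_inP Xm].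
  have : (#|X| <= #|@set0 E|)%N.
    apply: Xm; apply/imsetP; exists [set e] => //; by rewrite symdxx.
  by rewrite cards0 leqn0 cards_eq0 => /eqP ->; rewrite in_set0.
have finj := bij_inj fb.
have [g fK gK] := fb.
have memT X : X \in F -> f @: symd A X \in DC C.
  move=> XF; rewrite -H; apply/imsetP; exists (symd A X) => //.
  by apply/imsetP; exists X.
have memI Y : Y \in DC C -> exists2 X, X \in F & Y = f @: symd A X.
  by rewrite -H => /imsetP [Z /imsetP [X XF ->] ->]; exists X.
have SD : f @: A \in DC C by have := memT _ F0; rewrite symd0.
have nK : ~ Kset C (f @: A).
  by move/det_Kset => h; move: SD; rewrite inE h.
have KS j : Kset C (symd (f @: A) [set j]).
  apply/det_Kset.
  have : symd (f @: A) [set j] \notin DC C; last by rewrite inE negbK.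
  apply/negP => /memI [X XF e'].
  move: e'; rewrite -(gK j) -imset_set1 -imset_symd // => /(imset_inj finj) e'.
  have : [set g j] = X by rewrite -(symdK A [set g j]) e' symdK.
  by move=> eX; move: XF; rewrite -eX (negbTE (nsing _)).
have diagC := diag0 Cs nK KS.
have Ce i j : C i j = C j i by rewrite -{1}Cs mxE.
have ev Z : Z \in F -> ~~ odd #|symd A Z|.
  move=> ZF; have := memT Z ZF; rewrite inE; apply: contra => hodd.
  apply/eqP; apply: det_alt_odd.
  - by apply/matrixP => i j; rewrite !mxE Ce.
  - by move=> i; rewrite mxE diagC.
  - by rewrite card_imset.
move=> X Y XF YF.
by rewrite -(symd_symd A) odd_symd (negbTE (ev X XF)) (negbTE (ev Y YF)).
Qed.
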